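(* Let $X\in\mathcal M_{\mathbf r}$ and $V\in\mathrm T_X\mathcal M_{\mathbf r}$. Suppose $V$ is represented both by cores $\delta V_1,\dots,\delta V_d$ as $V(i_1,\dots,i_d)=\sum_{k=1}^dU_1(i_1)\cdots U_{k-1}(i_{k-1})\delta V_k(i_k)U_{k+1}(i_{k+1})\cdots U_d(i_d)$ with $(\delta V_k^L)^\top U_k^L=0$ for $k\in[d-1]$, and by cores $\delta\tilde V_1,\dots,\delta\tilde V_d$ as $V(i_1,\dots,i_d)=\sum_{k=1}^dU_1(i_1)\cdots U_{k-1}(i_{k-1})\delta\tilde V_k(i_k)\tilde U_{k+1}(i_{k+1})\cdots\tilde U_d(i_d)$ with $(\delta\tilde V_k^L)^\top U_k^L=0$ for $k\in[d-1]$. Then $\delta\tilde V_k^L=\delta V_k^LR_k^\top$ for all $k\in[d-1]$, where $R_k\in\mathbb R^{r_k\times r_k}$ is the invertible matrix with $X_{\ge k+1}=\tilde X_{\ge k+1}R_k$; and $\delta\tilde V_d^L=\delta V_d^L$.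
   Context: Fix $d\ge2$, positive integers $n_1,\dots,n_d$, $\mathbf r=(r_1,\dots,r_{d-1})$, $r_0=r_d=1$. Flattenings $Z^{<\mu>}$ use colexicographic ordering of row indices $(i_1,\dots,i_\mu)$ and column indices $(i_{\mu+1},\dots,i_d)$. $\mathcal M_{\mathbf r}$ is the manifold of tensors of TT-rank $\mathbf r$ (TT-rank $=(\mathrm{rank}\,Z^{<1>},\dots,\mathrm{rank}\,Z^{<d-1>})$). $U_1,\dots,U_d$ is a minimal left-orthogonal TT decomposition of $X$ ($U_k\in\mathbb R^{r_{k-1}\times n_k\times r_k}$, $X(i_1,\dots,i_d)=U_1(i_1)\cdots U_d(i_d)$, $(U_k^L)^\top U_k^L=I$ for $k<d$, with $U^L=U^{<2>}$, $U^R=U^{<1>}$), and $\tilde U_1,\dots,\tilde U_d$ is the minimal right-orthogonal TT decomposition of $X$ obtained from it by right-orthogonalization ($\tilde U_k^R(\tilde U_k^R)^\top=I$ for $k\ge2$). Right interface matrices: $X_{\ge d+1}=1$, $X_{\ge k}^\top=U_k^R(X_{\ge k+1}^\top\otimes I_{n_k})$, and $\tilde X_{\ge k}$ likewise from $\tilde U_k$; $X_{\ge k+1}$ and $\tilde X_{\ge k+1}$ have the same column space, so an invertible $R_k$ with $X_{\ge k+1}=\tilde X_{\ge k+1}R_k$ exists. *)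

(* Defs.v *)
From HB Require Import structures.
From mathcomp Require Import all_boot all_order all_algebra.
Set Implicit Arguments. Unset Strict Implicit. Unset Printing Implicit Defensive.
Import Order.TTheory GRing.Theory Num.Theory.
Local Open Scope ring_scope.

(* Indexing convention: the mode index k ranges over 1..d (nat); a multi-index
   is a dependent function i : forall k : nat, 'I_(n k) (components outside
   1..d are irrelevant).  TT ranks r : nat -> nat with r 0 = r d = 1.
   The k-th core C k : 'I_(n k) -> 'M_(r (k-1), r k), C k (i_k) = C_k(i_k). *)

Definition core (R : Type) (n r : nat -> nat) :=
  forall k : nat, 'I_(n k) -> 'M[R]_(r k.-1, r k).

Fixpoint ttrange (R : pzRingType) (n r : nat -> nat) (C : core R n r)
    (i : forall k, 'I_(n k)) (a b : nat) {struct b} : 'M[R]_(r a, r b) :=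
  match b return 'M[R]_(r a, r b) with
  | 0 => pid_mx (r a)
  | b'.+1 => if (b'.+1 <= a)%N then pid_mx (r a)
             else ttrange C i a b' *m C b'.+1 (i b'.+1)
  end.

(* The (only) entry of a 1x1 matrix (r 0 = r d = 1). *)
Definition ent (R : pzRingType) p q (M : 'M[R]_(p, q)) : R :=
  \sum_(a < p) \sum_(b < q) M a b.

(* Left unfolding U^L = U^{<2>} : rows (alpha, i) in colexicographic order
   (alpha fastest, i.e. row index i * p + alpha), columns beta. *)
Definition leftunf (R : Type) m p q (C : 'I_m -> 'M[R]_(p, q)) : 'M[R]_(m * p, q) :=
  \matrix_(ia, b) (mxvec (\matrix_(i < m, a < p) C i a b)) 0 ia.

(* Right unfolding U^R = U^{<1>} : rows alpha, columns (i, beta) in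
   colexicographic order (i fastest, column index beta * m + i). *)
Definition rightunf (R : Type) m p q (C : 'I_m -> 'M[R]_(p, q)) : 'M[R]_(p, q * m) :=
  \matrix_(a, bi) (mxvec (\matrix_(b < q, i < m) C i a b)) 0 bi.

(* Row of the right interface matrix X_{>=k} at the multi-index
   (i_k, ..., i_d): it is (C_k(i_k) ... C_d(i_d))^T, a 1 x r_{k-1} row. *)
Definition Xge (R : pzRingType) (n r : nat -> nat) (d : nat) (C : core R n r)
    (i : forall k, 'I_(n k)) (k : nat) : 'M[R]_(r d, r k.-1) :=
  (ttrange C i k.-1 d)^T.

(* Flattenings Z^{<mu>}: rows indexed by (i_1..i_mu), columns by
   (i_{mu+1}..i_d). *)
Definition RowT (n : nat -> nat) (mu : nat) :=
  {dffun forall j : 'I_mu, 'I_(n j.+1)}.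
Definition ColT (n : nat -> nat) (d mu : nat) :=
  {dffun forall j : 'I_(d - mu), 'I_(n (mu + j).+1)}.

Definition joinidx (n : nat -> nat) (d : nat) (i0 : forall k, 'I_(n k)) (mu : nat)
    (a : RowT n mu) (b : ColT n d mu) : forall k, 'I_(n k) :=
  fun k => insubd (i0 k)
    (if ((0 < k) && (k <= mu))%N then
       (if (insub k.-1 : option 'I_mu) is Some j then val (a j) else 0%N)
     else if ((mu < k) && (k <= d))%N then
       (if (insub (k - mu).-1 : option 'I_(d - mu)) is Some j then val (b j) else 0%N)
     else 0%N).

Definition flat (R : Type) (n : nat -> nat) (d : nat)
    (X : (forall k, 'I_(n k)) -> R) (i0 : forall k, 'I_(n k)) (mu : nat) :
    'M[R]_(#|RowT n mu|, #|ColT n d mu|) :=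
  \matrix_(p, q) X (joinidx i0 (enum_val p) (enum_val q)).

Definition has_TTrank (R : fieldType) (n : nat -> nat) (d : nat)
    (X : (forall k, 'I_(n k)) -> R) (r : nat -> nat) : Prop :=
  forall (i0 : forall k, 'I_(n k)) (mu : nat),
    (0 < mu < d)%N -> \rank (flat d X i0 mu) = r mu.

(* Main.v *)
Require Import Defs.
From HB Require Import structures.
From mathcomp Require Import all_boot all_order all_algebra zify.
Set Implicit Arguments. Unset Strict Implicit. Unset Printing Implicit Defensive.
Import Order.TTheory GRing.Theory Num.Theory.
Local Open Scope ring_scope.

Section TT.
Variables (R : fieldType) (n r : nat -> nat).
Implicit Types (C : core R n r).
Local Notation idx := (forall k, 'I_(n k)).

Lemma ttrange_id C (i : idx) a : ttrange C i a a = 1%:M.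
Proof. by case: a => [|a] /=; rewrite ?leqnn pid_mx_1. Qed.

Lemma ttrange_S C (i : idx) a b : (a <= b)%N ->
  ttrange C i a b.+1 = ttrange C i a b *m C b.+1 (i b.+1).
Proof. by move=> h /=; rewrite leqNgt ltnS h. Qed.

Lemma ttrange_split C (i : idx) a m b : (a <= m <= b)%N ->
  ttrange C i a b = ttrange C i a m *m ttrange C i m b.
Proof.
elim: b => [|b IH] /andP[am mb].
  move: mb; rewrite leqn0 => /eqP mE; subst m.
  move: am; rewrite leqn0 => /eqP aE; subst a.
  by rewrite ttrange_id mul1mx.
move: mb; rewrite leq_eqVlt => /orP[/eqP mE|]; first by subst m; rewrite ttrange_id mulmx1.
rewrite ltnS => mb.
rewrite ttrange_S ?(leq_trans am mb) // (IH _) ?am ?mb // -mulmxA -ttrange_S //.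
Qed.

Lemma ttrange_loc C (i i' : idx) a b : (forall x, (a < x <= b)%N -> i x = i' x) ->
  ttrange C i a b = ttrange C i' a b.
Proof.
elim: b => [|b IH] h //=.
case: ifP => // hb.
have ab : (a < b.+1)%N by rewrite ltnNge hb.
rewrite IH ?h // ?leqnn ?andbT //.
by move=> x /andP[h1 h2]; apply: h; rewrite h1 (leq_trans h2).
Qed.

Lemma ttrange_left C (i : idx) a b : (a < b)%N ->
  ttrange C i a b = C a.+1 (i a.+1) *m ttrange C i a.+1 b.
Proof.
move=> ab; rewrite (ttrange_split C i (m := a.+1)) ?ab ?leqnSn //.
by rewrite ttrange_S // ttrange_id mul1mx.
Qed.

Lemma leftunfE m p q (C : 'I_m -> 'M[R]_(p, q)) i a b :
  leftunf C (mxvec_index i a) b = C i a b.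
Proof. by rewrite /leftunf mxE mxvecE mxE. Qed.

Lemma leftunf_ext m p q (C D : 'I_m -> 'M[R]_(p, q)) :
  (forall x, C x = D x) -> leftunf C = leftunf D.
Proof.
move=> h; apply/matrixP => ia b; case/mxvec_indexP: ia => i a.
by rewrite !leftunfE h.
Qed.

Lemma leftunf_mulr m p q s (C : 'I_m -> 'M[R]_(p, q)) (M : 'M[R]_(q, s)) :
  leftunf (fun x => C x *m M) = leftunf C *m M.
Proof.
apply/matrixP => ia b; case/mxvec_indexP: ia => i a.
rewrite leftunfE !mxE; apply: eq_bigr => j _; by rewrite leftunfE.
Qed.

Lemma leftunf_sub m p q (C D : 'I_m -> 'M[R]_(p, q)) :
  leftunf (fun x => C x - D x) = leftunf C - leftunf D.
Proof.
apply/matrixP => ia b; case/mxvec_indexP: ia => i a.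
by rewrite !(mxE, mxvecE).
Qed.

Lemma leftunf_tmul m p q s (A : 'I_m -> 'M[R]_(p, q)) (B : 'I_m -> 'M[R]_(p, s)) :
  (leftunf A)^T *m leftunf B = \sum_x (A x)^T *m B x.
Proof.
apply/matrixP => y z; rewrite !mxE summxE.
rewrite (reindex _ (curry_mxvec_bij m p)) /=.
symmetry; under eq_bigr => k _ do rewrite mxE.
rewrite pair_big; apply: eq_bigr => -[i a] _ /=.
by rewrite [in RHS]mxE !leftunfE mxE.
Qed.

Lemma ent_sub p q (M N : 'M[R]_(p, q)) : ent (M - N) = ent M - ent N.
Proof.
rewrite /ent -sumrB; apply: eq_bigr => a _; rewrite -sumrB.
by apply: eq_bigr => b _; rewrite !mxE.
Qed.

Lemma ent0 p q (M : 'M[R]_(p, q)) : p = 1%N -> q = 1%N -> ent M = 0 -> M = 0.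
Proof.
move=> hp hq; subst p q; rewrite /ent !big_ord1 => h.
by apply/matrixP => a b; rewrite !ord1 h mxE.
Qed.

End TT.

Section Uniq.
Variables (R : fieldType) (n r : nat -> nat) (d : nat) (U Ut W : core R n r).
Local Notation idx := (forall k, 'I_(n k)).
Arguments U : clear implicits.
Arguments Ut : clear implicits.
Arguments W : clear implicits.

Definition upd (i : idx) m (x : 'I_(n m)) : idx :=
  fun k => if k == m then insubd (i k) (val x) else i k.

Lemma upd_eq (i : idx) m (x : 'I_(n m)) : upd i x m = x.
Proof. by apply: val_inj; rewrite /upd eqxx val_insubd ltn_ord. Qed.

Lemma upd_neq (i : idx) m (x : 'I_(n m)) k : k != m -> upd i x k = i k.
Proof. by move=> h; rewrite /upd (negbTE h). Qed.

Definition Sm (i : idx) m :=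
  \sum_(m.+1 <= k < d.+1) ttrange U i m k.-1 *m W k (i k) *m ttrange Ut i k d.

Lemma S_rec (i : idx) m : (m < d)%N ->
  Sm i m = U m.+1 (i m.+1) *m Sm i m.+1 + W m.+1 (i m.+1) *m ttrange Ut i m.+1 d.
Proof.
move=> hm; rewrite /Sm big_ltn ?ltnS // ttrange_id mul1mx addrC; congr (_ + _).
rewrite mulmx_sumr; apply: eq_big_nat => k /andP[hk _].
have hk' : (m < k.-1)%N by lia.
by rewrite (ttrange_left U i hk') !mulmxA.
Qed.

Lemma S_loc (i i' : idx) m : (forall x, (m < x)%N -> i x = i' x) -> Sm i m = Sm i' m.
Proof.
move=> h; apply: eq_big_nat => k /andP[hk _].
have hk' : (m < k)%N by [].
rewrite (h k hk') (@ttrange_loc _ _ _ U i i' _ _); last by move=> x /andP[hx _]; apply: h.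
rewrite (@ttrange_loc _ _ _ Ut i i' _ _) // => x /andP[hx _]; apply: h.
exact: ltn_trans hk' hx.
Qed.

Hypothesis hn : forall k, (0 < n k)%N.
Hypothesis lorth : forall k, (0 < k < d)%N -> \sum_x (U k x)^T *m U k x = 1%:M.
Hypothesis Wg : forall k, (0 < k < d)%N -> \sum_x (U k x)^T *m W k x = 0.
Hypothesis hS0 : forall i, Sm i 0 = 0.
Hypothesis span : forall k, (0 < k < d)%N -> forall v : 'rV[R]_(r k),
  (forall i, v *m ttrange Ut i k d = 0) -> v = 0.

Lemma S_zero m : (m < d)%N -> forall i, Sm i m = 0.
Proof.
elim: m => [|m IH] hm i; first exact: hS0.
have IH' := IH (ltnW hm).
have eqx : forall x, U m.+1 x *m Sm i m.+1 + W m.+1 x *m ttrange Ut i m.+1 d = 0.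
  move=> x; rewrite -(IH' (upd i x)) (S_rec (upd i x) (ltnW hm)) upd_eq.
  have e1 : Sm (upd i x) m.+1 = Sm i m.+1.
    apply: S_loc => y hy; apply: upd_neq; by rewrite gtn_eqF.
  have e2 : ttrange Ut (upd i x) m.+1 d = ttrange Ut i m.+1 d.
    apply: ttrange_loc => y /andP[hy _]; apply: upd_neq; by rewrite gtn_eqF.
  by rewrite e1 e2.
transitivity ((\sum_x (U m.+1 x)^T *m U m.+1 x) *m Sm i m.+1 +
              (\sum_x (U m.+1 x)^T *m W m.+1 x) *m ttrange Ut i m.+1 d).
  have h1 : (0 < m.+1 < d)%N by rewrite hm.
  by rewrite (lorth h1) (Wg h1) mul1mx mul0mx addr0.
rewrite !mulmx_suml -big_split /=; apply: big1 => x _.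
by rewrite -!mulmxA -mulmxDr eqx mulmx0.
Qed.

Lemma W_step k : (0 < k <= d)%N ->
  (forall k', (k < k' <= d)%N -> forall x, W k' x = 0) -> forall x, W k x = 0.
Proof.
case: k => // k /= hk hW x.
have Sk : forall i, Sm i k.+1 = 0.
  move=> i; rewrite /Sm big_nat_cond; apply: big1 => k' /andP[/andP[h1 h2] _].
  have hk' : (k.+1 < k' <= d)%N by rewrite h1 -ltnS.
  by rewrite (hW _ hk') mulmx0 mul0mx.
have hz : forall i, W k.+1 (i k.+1) *m ttrange Ut i k.+1 d = 0.
  move=> i; have := S_zero hk i; rewrite S_rec // Sk mulmx0 add0r //.
have hz' : forall i, W k.+1 x *m ttrange Ut i k.+1 d = 0.
  move=> i; rewrite -(hz (upd i x)) upd_eq (@ttrange_loc _ _ _ Ut i (upd i x) _ _) //.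
  by move=> y /andP[hy _]; rewrite upd_neq // gtn_eqF.
have [kd|kd] := eqVneq k.+1 d.
  have := hz' (fun k => Ordinal (hn k)).
  by rewrite -kd ttrange_id mulmx1.
apply/row_matrixP => j; rewrite row0; apply: span; first by rewrite /= ltn_neqAle kd hk.
by move=> i; rewrite -row_mul hz' row0.
Qed.

Lemma W_zero k : (0 < k <= d)%N -> forall x, W k x = 0.
Proof.
suff H : forall j k, (0 < k)%N -> (d - j <= k <= d)%N -> forall x, W k x = 0.
  by move=> /andP[h1 h2]; apply: (H d) => //; apply/andP; split; lia.
elim=> [|j IH] k0 h0 /andP[h1 h2].
  apply: W_step; first by apply/andP; split; lia.
  move=> k' /andP[hk' hk'']; exfalso; lia.
have [h3|h3] := leqP (d - j) k0; first by apply: IH => //; apply/andP; split; lia.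
apply: W_step; first by apply/andP; split; lia.
move=> k' /andP[hk' hk'']; apply: IH; first lia.
apply/andP; split; lia.
Qed.

End Uniq.

Lemma tr_sum_swap (R : fieldType) m p q s (A : 'I_m -> 'M[R]_(p, q)) (B : 'I_m -> 'M[R]_(p, s)) :
  (\sum_x (A x)^T *m B x)^T = \sum_x (B x)^T *m A x.
Proof.
apply/matrixP => a b; rewrite mxE !summxE; apply: eq_bigr => x _.
by rewrite !mxE; apply: eq_bigr => j _; rewrite !mxE mulrC.
Qed.

Section Span.
Variables (R : fieldType) (n r : nat -> nat) (d : nat) (U : core R n r).
Variable (X : (forall k, 'I_(n k)) -> R).
Local Notation idx := (forall k, 'I_(n k)).
Arguments U : clear implicits.

Lemma span_U (hn : forall k, (0 < n k)%N) : has_TTrank d X r ->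
  (forall i, X i = ent (ttrange U i 0 d)) ->
  forall k, (0 < k < d)%N -> forall v : 'rV[R]_(r k),
  (forall i, v *m ttrange U i k d = 0) -> v = 0.
Proof.
move=> hX hXU k hk v hv.
pose i0 : idx := fun k => Ordinal (hn k).
pose q0 : ColT n d k := @finfun _ (fun j : 'I_(d - k) => 'I_(n (k + j).+1)) (fun j => i0 _).
pose p0 : RowT n k := @finfun _ (fun j : 'I_k => 'I_(n j.+1)) (fun j => i0 _).
pose A := \matrix_(p < #|RowT n k|, j < r k)
   \sum_(a < r 0) (ttrange U (joinidx i0 (enum_val p) q0) 0 k) a j.
pose B := \matrix_(j < r k, q < #|ColT n d k|)
   \sum_(b < r d) (ttrange U (joinidx i0 p0 (enum_val q)) k d) j b.
have hf : flat d X i0 k = A *m B.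
  apply/matrixP => p q; rewrite !mxE hXU (@ttrange_split _ _ _ U _ 0 k d); last first.
    by apply/andP; split; lia.
  have e1 : ttrange U (joinidx i0 (enum_val p) (enum_val q)) 0 k =
            ttrange U (joinidx i0 (enum_val p) q0) 0 k.
    apply: ttrange_loc => x hx; rewrite /joinidx; case: ifP => h //; by rewrite hx in h.
  have e2 : ttrange U (joinidx i0 (enum_val p) (enum_val q)) k d =
            ttrange U (joinidx i0 p0 (enum_val q)) k d.
    apply: ttrange_loc => x hx.
    rewrite /joinidx; case: ifP => h1; first by exfalso; lia.
    case: ifP => h2 //; by rewrite hx in h2.
  rewrite e1 e2 /ent.
  under eq_bigr => a _ do under eq_bigr => b _ do rewrite mxE.
  under [RHS]eq_bigr => j _ do rewrite !mxE big_distrl /=.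
  rewrite [RHS]exchange_big /=; apply: eq_bigr => a _.
  under [RHS]eq_bigr => j _ do rewrite big_distrr /=.
  by rewrite [RHS]exchange_big.
have rB : row_free B.
  rewrite /row_free eqn_leq rank_leq_row /=.
  by rewrite -{1}(hX i0 k hk) hf mxrankM_maxr.
have vB : v *m B = 0 *m B.
  rewrite mul0mx; apply/matrixP => z q; rewrite !mxE.
  under eq_bigr => j _ do rewrite mxE big_distrr /=.
  rewrite exchange_big /=; apply: big1 => b _.
  have := congr1 (fun M : 'M[R]_(1, r d) => M z b) (hv (joinidx i0 p0 (enum_val q))).
  by rewrite !mxE.
exact: (row_free_inj rB vB).
Qed.

End Span.

Lemma gauge_tt (R : fieldType) (n r : nat -> nat) (d : nat) (U Ut : core R n r)
  (G : forall k, 'M[R]_(r k)) :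
  (forall k (ik : 'I_(n k)), (0 < k <= d)%N -> U k ik *m G k = G k.-1 *m Ut k ik) ->
  forall i a b, (a <= b <= d)%N -> G a *m ttrange Ut i a b = ttrange U i a b *m G b.
Proof.
move=> hG i a; elim=> [|b IH] /andP[ab bd].
  move: ab; rewrite leqn0 => /eqP aE; subst a.
  by rewrite !ttrange_id mul1mx mulmx1.
move: ab; rewrite leq_eqVlt => /orP[/eqP aE|ab].
  by subst a; rewrite !ttrange_id mul1mx mulmx1.
rewrite ltnS in ab.
have h : (0 < b.+1 <= d)%N by [].
rewrite !ttrange_S // -[RHS]mulmxA (hG _ (i b.+1) h) [RHS]mulmxA -IH ?mulmxA //.
by apply/andP; split; lia.
Qed.

Theorem lemma12 (R : realFieldType) (d : nat) (n r : nat -> nat)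
    (U Ut dV dVt : core R n r) (X V : (forall k, 'I_(n k)) -> R) :
  (2 <= d)%N ->
  (forall k, 0 < n k)%N ->
  r 0%N = 1%N -> r d = 1%N ->
  (* X lies in M_r *)
  has_TTrank d X r ->
  (* U_1..U_d : left-orthogonal TT decomposition of X *)
  (forall i, X i = ent (ttrange U i 0 d)) ->
  (forall k, (0 < k < d)%N -> (leftunf (U k))^T *m leftunf (U k) = 1%:M) ->
  (* Ut_1..Ut_d : obtained from U by right-orthogonalization (gauge
     transformation by invertible matrices) and right-orthogonal *)
  (exists G : forall k, 'M[R]_(r k),
     [/\ G 0%N = 1%:M, G d = 1%:M,
         (forall k, (0 < k < d)%N -> G k \in unitmx) &
         (forall k (ik : 'I_(n k)), (0 < k <= d)%N ->
            U k ik *m G k = G k.-1 *m Ut k ik)]) ->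
  (forall k, (1 < k <= d)%N -> rightunf (Ut k) *m (rightunf (Ut k))^T = 1%:M) ->
  (* first representation of V *)
  (forall i, V i = ent (\sum_(1 <= k < d.+1)
                          ttrange U i 0 k.-1 *m dV k (i k) *m ttrange U i k d)) ->
  (forall k, (0 < k < d)%N -> (leftunf (dV k))^T *m leftunf (U k) = 0) ->
  (* second representation of V *)
  (forall i, V i = ent (\sum_(1 <= k < d.+1)
                          ttrange U i 0 k.-1 *m dVt k (i k) *m ttrange Ut i k d)) ->
  (forall k, (0 < k < d)%N -> (leftunf (dVt k))^T *m leftunf (U k) = 0) ->
  (forall k, (0 < k < d)%N ->
     forall Rk : 'M[R]_(r k), Rk \in unitmx ->
       (forall i, Xge d U i k.+1 = Xge d Ut i k.+1 *m Rk) ->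
       leftunf (dVt k) = leftunf (dV k) *m Rk^T)
  /\ leftunf (dVt d) = leftunf (dV d).
Proof.
move=> d2 hn r0 rd hX hXU hlo [G [G0 Gd Gu hG]] hro hV1 hVg hV2 hVtg.
have gaugeL : forall i a, (a <= d)%N -> ttrange U i a d = G a *m ttrange Ut i a d.
  move=> i a ad; rewrite (gauge_tt hG) ?ad ?leqnn // Gd mulmx1 //.
have Gunit : forall a, (a <= d)%N -> G a \in unitmx.
  move=> a ad; case: a ad => [|a] ad; first by rewrite G0 unitmx1.
  have [e|ne] := eqVneq a.+1 d; first by rewrite e Gd unitmx1.
  by apply: Gu; apply/andP; split; lia.
pose W : core R n r := fun k x => dV k x *m G k - dVt k x.
have hS0 : forall i, Sm d U Ut W i 0 = 0.
  move=> i; have := hV1 i; rewrite hV2 => /eqP; rewrite eq_sym -subr_eq0 -ent_sub.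
  move=> /eqP /(ent0 r0 rd) e; rewrite /Sm -[RHS]e -sumrB.
  apply: eq_big_nat => k /andP[h1 h2].
  have kd : (k <= d)%N by lia.
  by rewrite (gaugeL i k kd) /W mulmxBr mulmxBl !mulmxA.
have lorth : forall k, (0 < k < d)%N -> \sum_x (U k x)^T *m U k x = 1%:M.
  by move=> k hk; rewrite -leftunf_tmul hlo.
have tU : forall k (C : 'I_(n k) -> 'M[R]_(r k.-1, r k)), (0 < k < d)%N ->
    (leftunf C)^T *m leftunf (U k) = 0 -> \sum_x (U k x)^T *m C x = 0.
  move=> k C hk; rewrite leftunf_tmul => h.
  by rewrite -tr_sum_swap h trmx0.
have Wg : forall k, (0 < k < d)%N -> \sum_x (U k x)^T *m W k x = 0.
  move=> k hk.
  have -> : \sum_x (U k x)^T *m W k x =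
      (\sum_x (U k x)^T *m dV k x) *m G k - \sum_x (U k x)^T *m dVt k x.
    rewrite mulmx_suml -sumrB; apply: eq_bigr => x _.
    by rewrite /W mulmxBr mulmxA.
  by rewrite (tU _ _ hk (hVg k hk)) (tU _ _ hk (hVtg k hk)) mul0mx subr0.
have spanUt : forall k, (0 < k < d)%N -> forall v : 'rV[R]_(r k),
    (forall i, v *m ttrange Ut i k d = 0) -> v = 0.
  move=> k hk v hv.
  have kd : (k <= d)%N by lia.
  have h0 : v *m invmx (G k) = 0.
    apply: (span_U hn hX hXU hk) => i.
    by rewrite gaugeL // -mulmxA (mulKmx (Gunit k kd)) hv.
  by rewrite -(mulmxKV (Gunit k kd) v) h0 mul0mx.
have Wz := W_zero hn lorth Wg hS0 spanUt.
have hdVt : forall k, (0 < k <= d)%N -> forall x, dVt k x = dV k x *m G k.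
  move=> k hk x; have := Wz k hk x; rewrite /W => /eqP; rewrite subr_eq0 => /eqP ->.
  by [].
split.
  move=> k hk Rk _ hR.
  have kd : (0 < k <= d)%N by lia.
  have GR : G k = Rk^T.
    apply/eqP; rewrite -subr_eq0; apply/eqP/row_matrixP => j; rewrite row0.
    apply: (spanUt k hk) => i; rewrite -row_mul mulmxBl.
    have := congr1 trmx (hR i); rewrite /Xge /= trmx_mul !trmxK => e.
    by rewrite -gaugeL ?(ltnW (proj2 (andP hk))) // -e subrr row0.
  rewrite -GR -leftunf_mulr; apply: leftunf_ext => x; exact: hdVt.
apply: leftunf_ext => x; rewrite hdVt ?Gd ?mulmx1 //; lia.
Qed.
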